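(* The Lack model structure on $2\mathrm{Cat}$ is left-induced along $\mathbb{H}\colon 2\mathrm{Cat}\to\mathrm{DblCat}$ (from the adjunction $\mathbb{H}\dashv\mathbf{H}$) from the model structure on $\mathrm{DblCat}$ right-induced along $(\mathbf{H},\mathcal{V})$ from two copies of the Lack model structure. That is, a 2-functor $F\colon\mathcal{A}\to\mathcal{B}$ is a biequivalence (resp.\ cofibration) in the Lack model structure if and only if $\mathbb{H}F$ is a weak equivalence (resp.\ cofibration) in $\mathrm{DblCat}$.
   Context: $\mathbb{H}\colon 2\mathrm{Cat}\to\mathrm{DblCat}$ sends a 2-category to the double category with the same objects, its morphisms as horizontal morphisms, only identity vertical morphisms, and its 2-cells as squares; its right adjoint $\mathbf{H}$ sends a double category to its underlying horizontal 2-category (objects, horizontal morphisms, squares with identity vertical boundaries as 2-cells). $\mathcal{V}\mathbb{A}$ is the 2-category with vertical morphisms as objects, squares as morphisms, and as 2-cells from $\alpha\colon(u\,{}^{a}_{b}\,v)$ to $\beta\colon(u\,{}^{c}_{d}\,v)$ pairs of squares with identity vertical boundaries $\sigma_0\colon a\Rightarrow c$, $\sigma_1\colon b\Rightarrow d$ with $\sigma_0$ on top of $\beta$ equal to $\alpha$ on top of $\sigma_1$. The Lack model structure on $2\mathrm{Cat}$ has biequivalences as weak equivalences, Lack fibrations as fibrations (2-functors $G$ for which equivalences $b\colon B\to GC$ lift to equivalences $a$ with $Ga=b$, and invertible 2-cells $\beta\colon b\cong Gc$ lift to invertible 2-cells with image $\beta$), and cofibrations the maps with the left lifting property against all 2-functors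 that are both. The model structure on $\mathrm{DblCat}$ has as weak equivalences (resp.\ fibrations) the double functors $F$ with $\mathbf{H}F$ and $\mathcal{V}F$ biequivalences (resp.\ Lack fibrations), and as cofibrations the maps with the left lifting property against trivial fibrations. *)

(* Defs.v *)
(* Strict 2-categories and strict
   double categories, presented "globularly": each kind of cell lives in one
   type, with boundary functions, and composition is a total operation whose
   laws are only required on composable arguments. *)
Set Implicit Arguments.
Unset Strict Implicit.

(* Underlying data of a (possibly non-lawful) 2-category.
   mcomp f g = "f then g" (g o f);  vcomp a b = "a then b" (vertical);
   hcomp a b = horizontal composite with a on the left (b * a). *)
Record TwoCat0 := {
  ob2 : Type; mor2 : Type; cell2 : Type;
  msrc : mor2 -> ob2; mtgt : mor2 -> ob2;
  csrc : cell2 -> mor2; ctgt : cell2 -> mor2;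
  idm : ob2 -> mor2; mcomp : mor2 -> mor2 -> mor2;
  idc : mor2 -> cell2;
  vcomp : cell2 -> cell2 -> cell2;
  hcomp : cell2 -> cell2 -> cell2 }.

Arguments msrc {t} _. Arguments mtgt {t} _. Arguments csrc {t} _.
Arguments ctgt {t} _. Arguments idm {t} _. Arguments mcomp {t} _ _.
Arguments idc {t} _. Arguments vcomp {t} _ _. Arguments hcomp {t} _ _.

Record TwoCatLaws (T : TwoCat0) : Prop := {
  l_idm_src : forall x : ob2 T, msrc (idm x) = x;
  l_idm_tgt : forall x : ob2 T, mtgt (idm x) = x;
  l_mcomp_src : forall f g : mor2 T, mtgt f = msrc g -> msrc (mcomp f g) = msrc f;
  l_mcomp_tgt : forall f g : mor2 T, mtgt f = msrc g -> mtgt (mcomp f g) = mtgt g;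
  l_mcomp_idl : forall f : mor2 T, mcomp (idm (msrc f)) f = f;
  l_mcomp_idr : forall f : mor2 T, mcomp f (idm (mtgt f)) = f;
  l_mcomp_assoc : forall f g h : mor2 T, mtgt f = msrc g -> mtgt g = msrc h ->
      mcomp (mcomp f g) h = mcomp f (mcomp g h);
  l_cell_par_src : forall a : cell2 T, msrc (csrc a) = msrc (ctgt a);
  l_cell_par_tgt : forall a : cell2 T, mtgt (csrc a) = mtgt (ctgt a);
  l_idc_src : forall f : mor2 T, csrc (idc f) = f;
  l_idc_tgt : forall f : mor2 T, ctgt (idc f) = f;
  l_vcomp_src : forall a b : cell2 T, ctgt a = csrc b -> csrc (vcomp a b) = csrc a;
  l_vcomp_tgt : forall a b : cell2 T, ctgt a = csrc b -> ctgt (vcomp a b) = ctgt b;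
  l_vcomp_idl : forall a : cell2 T, vcomp (idc (csrc a)) a = a;
  l_vcomp_idr : forall a : cell2 T, vcomp a (idc (ctgt a)) = a;
  l_vcomp_assoc : forall a b c : cell2 T, ctgt a = csrc b -> ctgt b = csrc c ->
      vcomp (vcomp a b) c = vcomp a (vcomp b c);
  l_hcomp_src : forall a b : cell2 T, mtgt (csrc a) = msrc (csrc b) ->
      csrc (hcomp a b) = mcomp (csrc a) (csrc b);
  l_hcomp_tgt : forall a b : cell2 T, mtgt (csrc a) = msrc (csrc b) ->
      ctgt (hcomp a b) = mcomp (ctgt a) (ctgt b);
  l_hcomp_idl : forall a : cell2 T, hcomp (idc (idm (msrc (csrc a)))) a = a;
  l_hcomp_idr : forall a : cell2 T, hcomp a (idc (idm (mtgt (csrc a)))) = a;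
  l_hcomp_assoc : forall a b c : cell2 T, mtgt (csrc a) = msrc (csrc b) ->
      mtgt (csrc b) = msrc (csrc c) -> hcomp (hcomp a b) c = hcomp a (hcomp b c);
  l_idc_mcomp : forall f g : mor2 T, mtgt f = msrc g ->
      idc (mcomp f g) = hcomp (idc f) (idc g);
  l_interchange : forall a b c d : cell2 T, mtgt (csrc a) = msrc (csrc b) ->
      ctgt a = csrc c -> ctgt b = csrc d ->
      vcomp (hcomp a b) (hcomp c d) = hcomp (vcomp a c) (vcomp b d) }.

Record TwoCat := { tc :> TwoCat0; tc_laws : TwoCatLaws tc }.

Record TwoFun (A B : TwoCat0) := {
  fo : ob2 A -> ob2 B; fm : mor2 A -> mor2 B; fc : cell2 A -> cell2 B;
  f_msrc : forall f, msrc (fm f) = fo (msrc f);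
  f_mtgt : forall f, mtgt (fm f) = fo (mtgt f);
  f_csrc : forall a, csrc (fc a) = fm (csrc a);
  f_ctgt : forall a, ctgt (fc a) = fm (ctgt a);
  f_idm : forall x, fm (idm x) = idm (fo x);
  f_mcomp : forall f g, mtgt f = msrc g -> fm (mcomp f g) = mcomp (fm f) (fm g);
  f_idc : forall f, fc (idc f) = idc (fm f);
  f_vcomp : forall a b, ctgt a = csrc b -> fc (vcomp a b) = vcomp (fc a) (fc b);
  f_hcomp : forall a b, mtgt (csrc a) = msrc (csrc b) ->
      fc (hcomp a b) = hcomp (fc a) (fc b) }.

(* Pre-2-categories: 2-category data together with a predicate singling out *)
(* which elements of cell2 are genuine 2-cells (used for the 2-categories    *)
(* H A and V A built from a double category A, whose 2-cells are squares    *)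
(* (resp. tuples of squares) satisfying conditions).  For an honest          *)
Record Pre2 := { p2 :> TwoCat0; cv : cell2 p2 -> Prop }.

Definition pre2_of (T : TwoCat0) : Pre2 := {| p2 := T; cv := fun _ => True |}.

Record PFun (A B : Pre2) := {
  pfo : ob2 A -> ob2 B; pfm : mor2 A -> mor2 B; pfc : cell2 A -> cell2 B }.

Definition pfun_of (A B : TwoCat0) (F : TwoFun A B) : PFun (pre2_of A) (pre2_of B) :=
  @Build_PFun (pre2_of A) (pre2_of B) (fo F) (fm F) (fc F).

Section Notions.
Variable T : Pre2.

Definition is_cell (a : cell2 T) (f g : mor2 T) : Prop :=
  cv a /\ csrc a = f /\ ctgt a = g.

Definition invertible_cell (a : cell2 T) : Prop :=
  cv a /\ exists b, is_cell b (ctgt a) (csrc a) /\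
    vcomp a b = idc (csrc a) /\ vcomp b a = idc (ctgt a).

Definition iso_cell (a : cell2 T) (f g : mor2 T) : Prop :=
  is_cell a f g /\ invertible_cell a.

Definition equivalence (f : mor2 T) : Prop :=
  exists (g : mor2 T) (a b : cell2 T),
    msrc g = mtgt f /\ mtgt g = msrc f /\
    iso_cell a (idm (msrc f)) (mcomp f g) /\
    iso_cell b (mcomp g f) (idm (mtgt f)).
End Notions.

(* Biequivalence: biessentially surjective on objects and locally an
   equivalence of hom-categories (essentially surjective + fully faithful). *)
Definition biequivalence (A B : Pre2) (F : PFun A B) : Prop :=
  (forall y : ob2 B, exists (x : ob2 A) (g : mor2 B),
      msrc g = pfo F x /\ mtgt g = y /\ equivalence g) /\
  (forall (x x' : ob2 A) (g : mor2 B), msrc g = pfo F x -> mtgt g = pfo F x' ->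
      exists (f : mor2 A) (b : cell2 B),
        msrc f = x /\ mtgt f = x' /\ iso_cell b (pfm F f) g) /\
  (forall (f f' : mor2 A) (b : cell2 B), msrc f = msrc f' -> mtgt f = mtgt f' ->
      is_cell b (pfm F f) (pfm F f') ->
      exists a : cell2 A, is_cell a f f' /\ pfc F a = b) /\
  (forall a a' : cell2 A, cv a -> cv a' -> csrc a = csrc a' -> ctgt a = ctgt a' ->
      pfc F a = pfc F a' -> a = a').

Definition lack_fibration (A B : Pre2) (F : PFun A B) : Prop :=
  (forall (c : ob2 A) (b : mor2 B), mtgt b = pfo F c -> equivalence b ->
      exists a : mor2 A, mtgt a = c /\ equivalence a /\ pfm F a = b) /\
  (forall (c : mor2 A) (beta : cell2 B), ctgt beta = pfm F c -> invertible_cell beta ->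
      exists alpha : cell2 A, ctgt alpha = c /\ invertible_cell alpha /\
        pfc F alpha = beta).

Definition biequiv2 (A B : TwoCat) (F : TwoFun A B) : Prop :=
  biequivalence (pfun_of F).

Definition llp2 (A B X Y : TwoCat) (i : TwoFun A B) (p : TwoFun X Y) : Prop :=
  forall (u : TwoFun A X) (v : TwoFun B Y),
    (forall x, fo p (fo u x) = fo v (fo i x)) ->
    (forall f, fm p (fm u f) = fm v (fm i f)) ->
    (forall a, fc p (fc u a) = fc v (fc i a)) ->
    exists h : TwoFun B X,
      (forall x, fo h (fo i x) = fo u x) /\ (forall f, fm h (fm i f) = fm u f) /\
      (forall a, fc h (fc i a) = fc u a) /\
      (forall x, fo p (fo h x) = fo v x) /\ (forall f, fm p (fm h f) = fm v f) /\
      (forall a, fc p (fc h a) = fc v a).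

Definition cofibration2 (A B : TwoCat) (F : TwoFun A B) : Prop :=
  forall (X Y : TwoCat) (p : TwoFun X Y),
    lack_fibration (pfun_of p) -> biequivalence (pfun_of p) -> llp2 F p.

(* A square s has horizontal boundaries stop s, sbot s and vertical
   boundaries slft s, srgt s.  dhc f g = "f then g", dvc u v = "u then v"
   (u on top).  dsq_hid u : horizontal identity square on the vertical u;
   dsq_vid f : vertical identity square on the horizontal f.
   dsq_hc a b : a left of b;  dsq_vc a b : a on top of b. *)
Record Dbl0 := {
  dob : Type; dh : Type; dv : Type; dsq : Type;
  hsrc : dh -> dob; htgt : dh -> dob;
  vsrc : dv -> dob; vtgt : dv -> dob;
  stop : dsq -> dh; sbot : dsq -> dh; slft : dsq -> dv; srgt : dsq -> dv;
  dhid : dob -> dh; dhc : dh -> dh -> dh;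
  dvid : dob -> dv; dvc : dv -> dv -> dv;
  dsq_hid : dv -> dsq; dsq_vid : dh -> dsq;
  dsq_hc : dsq -> dsq -> dsq; dsq_vc : dsq -> dsq -> dsq }.

Arguments hsrc {d} _. Arguments htgt {d} _. Arguments vsrc {d} _.
Arguments vtgt {d} _. Arguments stop {d} _. Arguments sbot {d} _.
Arguments slft {d} _. Arguments srgt {d} _. Arguments dhid {d} _.
Arguments dhc {d} _ _. Arguments dvid {d} _. Arguments dvc {d} _ _.
Arguments dsq_hid {d} _. Arguments dsq_vid {d} _. Arguments dsq_hc {d} _ _.
Arguments dsq_vc {d} _ _.

Record DblLaws (D : Dbl0) : Prop := {
  d_hid_src : forall x : dob D, hsrc (dhid x) = x;
  d_hid_tgt : forall x : dob D, htgt (dhid x) = x;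
  d_hc_src : forall f g : dh D, htgt f = hsrc g -> hsrc (dhc f g) = hsrc f;
  d_hc_tgt : forall f g : dh D, htgt f = hsrc g -> htgt (dhc f g) = htgt g;
  d_hc_idl : forall f : dh D, dhc (dhid (hsrc f)) f = f;
  d_hc_idr : forall f : dh D, dhc f (dhid (htgt f)) = f;
  d_hc_assoc : forall f g h : dh D, htgt f = hsrc g -> htgt g = hsrc h ->
      dhc (dhc f g) h = dhc f (dhc g h);
  d_vid_src : forall x : dob D, vsrc (dvid x) = x;
  d_vid_tgt : forall x : dob D, vtgt (dvid x) = x;
  d_vc_src : forall u v : dv D, vtgt u = vsrc v -> vsrc (dvc u v) = vsrc u;
  d_vc_tgt : forall u v : dv D, vtgt u = vsrc v -> vtgt (dvc u v) = vtgt v;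
  d_vc_idl : forall u : dv D, dvc (dvid (vsrc u)) u = u;
  d_vc_idr : forall u : dv D, dvc u (dvid (vtgt u)) = u;
  d_vc_assoc : forall u v w : dv D, vtgt u = vsrc v -> vtgt v = vsrc w ->
      dvc (dvc u v) w = dvc u (dvc v w);
  d_sq_lft_src : forall s : dsq D, vsrc (slft s) = hsrc (stop s);
  d_sq_lft_tgt : forall s : dsq D, vtgt (slft s) = hsrc (sbot s);
  d_sq_rgt_src : forall s : dsq D, vsrc (srgt s) = htgt (stop s);
  d_sq_rgt_tgt : forall s : dsq D, vtgt (srgt s) = htgt (sbot s);
  d_sqhid_lft : forall u : dv D, slft (dsq_hid u) = u;
  d_sqhid_rgt : forall u : dv D, srgt (dsq_hid u) = u;
  d_sqhid_top : forall u : dv D, stop (dsq_hid u) = dhid (vsrc u);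
  d_sqhid_bot : forall u : dv D, sbot (dsq_hid u) = dhid (vtgt u);
  d_sqvid_top : forall f : dh D, stop (dsq_vid f) = f;
  d_sqvid_bot : forall f : dh D, sbot (dsq_vid f) = f;
  d_sqvid_lft : forall f : dh D, slft (dsq_vid f) = dvid (hsrc f);
  d_sqvid_rgt : forall f : dh D, srgt (dsq_vid f) = dvid (htgt f);
  d_sqhc_top : forall a b : dsq D, srgt a = slft b -> stop (dsq_hc a b) = dhc (stop a) (stop b);
  d_sqhc_bot : forall a b : dsq D, srgt a = slft b -> sbot (dsq_hc a b) = dhc (sbot a) (sbot b);
  d_sqhc_lft : forall a b : dsq D, srgt a = slft b -> slft (dsq_hc a b) = slft a;
  d_sqhc_rgt : forall a b : dsq D, srgt a = slft b -> srgt (dsq_hc a b) = srgt b;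
  d_sqvc_lft : forall a b : dsq D, sbot a = stop b -> slft (dsq_vc a b) = dvc (slft a) (slft b);
  d_sqvc_rgt : forall a b : dsq D, sbot a = stop b -> srgt (dsq_vc a b) = dvc (srgt a) (srgt b);
  d_sqvc_top : forall a b : dsq D, sbot a = stop b -> stop (dsq_vc a b) = stop a;
  d_sqvc_bot : forall a b : dsq D, sbot a = stop b -> sbot (dsq_vc a b) = sbot b;
  d_sqhc_idl : forall a : dsq D, dsq_hc (dsq_hid (slft a)) a = a;
  d_sqhc_idr : forall a : dsq D, dsq_hc a (dsq_hid (srgt a)) = a;
  d_sqhc_assoc : forall a b c : dsq D, srgt a = slft b -> srgt b = slft c ->
      dsq_hc (dsq_hc a b) c = dsq_hc a (dsq_hc b c);
  d_sqvc_idl : forall a : dsq D, dsq_vc (dsq_vid (stop a)) a = a;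
  d_sqvc_idr : forall a : dsq D, dsq_vc a (dsq_vid (sbot a)) = a;
  d_sqvc_assoc : forall a b c : dsq D, sbot a = stop b -> sbot b = stop c ->
      dsq_vc (dsq_vc a b) c = dsq_vc a (dsq_vc b c);
  d_sqhid_vc : forall u v : dv D, vtgt u = vsrc v ->
      dsq_hid (dvc u v) = dsq_vc (dsq_hid u) (dsq_hid v);
  d_sqvid_hc : forall f g : dh D, htgt f = hsrc g ->
      dsq_vid (dhc f g) = dsq_hc (dsq_vid f) (dsq_vid g);
  d_sqhid_vid : forall x : dob D, dsq_hid (dvid x) = dsq_vid (dhid x);
  d_interchange : forall a b c d : dsq D, srgt a = slft b -> srgt c = slft d ->
      sbot a = stop c -> sbot b = stop d ->
      dsq_vc (dsq_hc a b) (dsq_hc c d) = dsq_hc (dsq_vc a c) (dsq_vc b d) }.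

Record DblCat := { dc :> Dbl0; dc_laws : DblLaws dc }.

Record DFun (X Y : Dbl0) := {
  go : dob X -> dob Y; gh : dh X -> dh Y; gv : dv X -> dv Y; gs : dsq X -> dsq Y;
  g_hsrc : forall f, hsrc (gh f) = go (hsrc f);
  g_htgt : forall f, htgt (gh f) = go (htgt f);
  g_vsrc : forall u, vsrc (gv u) = go (vsrc u);
  g_vtgt : forall u, vtgt (gv u) = go (vtgt u);
  g_top : forall s, stop (gs s) = gh (stop s);
  g_bot : forall s, sbot (gs s) = gh (sbot s);
  g_lft : forall s, slft (gs s) = gv (slft s);
  g_rgt : forall s, srgt (gs s) = gv (srgt s);
  g_hid : forall x, gh (dhid x) = dhid (go x);
  g_hc : forall f g, htgt f = hsrc g -> gh (dhc f g) = dhc (gh f) (gh g);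
  g_vid : forall x, gv (dvid x) = dvid (go x);
  g_vc : forall u v, vtgt u = vsrc v -> gv (dvc u v) = dvc (gv u) (gv v);
  g_sqhid : forall u, gs (dsq_hid u) = dsq_hid (gv u);
  g_sqvid : forall f, gs (dsq_vid f) = dsq_vid (gh f);
  g_sqhc : forall a b, srgt a = slft b -> gs (dsq_hc a b) = dsq_hc (gs a) (gs b);
  g_sqvc : forall a b, sbot a = stop b -> gs (dsq_vc a b) = dsq_vc (gs a) (gs b) }.

Definition globular (D : Dbl0) (s : dsq D) : Prop :=
  slft s = dvid (hsrc (stop s)) /\ srgt s = dvid (htgt (stop s)).

Definition HH (D : Dbl0) : Pre2 :=
  {| p2 := {| ob2 := dob D; mor2 := dh D; cell2 := dsq D;
              msrc := @hsrc D; mtgt := @htgt D;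
              csrc := @stop D; ctgt := @sbot D;
              idm := @dhid D; mcomp := @dhc D;
              idc := @dsq_vid D; vcomp := @dsq_vc D; hcomp := @dsq_hc D |};
     cv := @globular D |}.

Definition HHfun (X Y : Dbl0) (G : DFun X Y) : PFun (HH X) (HH Y) :=
  @Build_PFun (HH X) (HH Y) (go G) (gh G) (gs G).

(* A 2-cell of V D from alpha to beta is the pair (sig0, sig1); we record the
   source alpha and target beta as well. *)
Record VCell (S : Type) := mkVCell { va : S; vb : S; vs0 : S; vs1 : S }.

Definition VCell_wf (D : Dbl0) (c : VCell (dsq D)) : Prop :=
  slft (va c) = slft (vb c) /\ srgt (va c) = srgt (vb c) /\
  globular (vs0 c) /\ globular (vs1 c) /\
  stop (vs0 c) = stop (va c) /\ sbot (vs0 c) = stop (vb c) /\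
  stop (vs1 c) = sbot (va c) /\ sbot (vs1 c) = sbot (vb c) /\
  dsq_vc (vs0 c) (vb c) = dsq_vc (va c) (vs1 c).

Definition VV (D : Dbl0) : Pre2 :=
  {| p2 := {| ob2 := dv D; mor2 := dsq D; cell2 := VCell (dsq D);
              msrc := @slft D; mtgt := @srgt D;
              csrc := @va _; ctgt := @vb _;
              idm := @dsq_hid D; mcomp := @dsq_hc D;
              idc := fun s => mkVCell s s (dsq_vid (stop s)) (dsq_vid (sbot s));
              vcomp := fun c c' => mkVCell (va c) (vb c')
                         (dsq_vc (vs0 c) (vs0 c')) (dsq_vc (vs1 c) (vs1 c'));
              hcomp := fun c c' => mkVCell (dsq_hc (va c) (va c'))
                         (dsq_hc (vb c) (vb c'))
                         (dsq_hc (vs0 c) (vs0 c')) (dsq_hc (vs1 c) (vs1 c')) |};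
     cv := @VCell_wf D |}.

Definition VVfun (X Y : Dbl0) (G : DFun X Y) : PFun (VV X) (VV Y) :=
  @Build_PFun (VV X) (VV Y) (gv G) (gs G)
     (fun c => mkVCell (gs G (va c)) (gs G (vb c)) (gs G (vs0 c)) (gs G (vs1 c))).

Definition dbl_weq (X Y : Dbl0) (G : DFun X Y) : Prop :=
  biequivalence (HHfun G) /\ biequivalence (VVfun G).

Definition dbl_trivfib (X Y : Dbl0) (G : DFun X Y) : Prop :=
  lack_fibration (HHfun G) /\ lack_fibration (VVfun G) /\ dbl_weq G.

Definition llpD (P Q X Y : Dbl0) (i : DFun P Q) (p : DFun X Y) : Prop :=
  forall (u : DFun P X) (v : DFun Q Y),
    (forall x, go p (go u x) = go v (go i x)) ->
    (forall f, gh p (gh u f) = gh v (gh i f)) ->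
    (forall w, gv p (gv u w) = gv v (gv i w)) ->
    (forall s, gs p (gs u s) = gs v (gs i s)) ->
    exists h : DFun Q X,
      (forall x, go h (go i x) = go u x) /\ (forall f, gh h (gh i f) = gh u f) /\
      (forall w, gv h (gv i w) = gv u w) /\ (forall s, gs h (gs i s) = gs u s) /\
      (forall x, go p (go h x) = go v x) /\ (forall f, gh p (gh h f) = gh v f) /\
      (forall w, gv p (gv h w) = gv v w) /\ (forall s, gs p (gs h s) = gs v s).

Definition dbl_cofibration (P Q : Dbl0) (i : DFun P Q) : Prop :=
  forall (X Y : DblCat) (p : DFun X Y), dbl_trivfib p -> llpD i p.

(* vertical morphisms are only identities: the vertical arrow dvid x is
   represented by the object x itself. *)
Definition HDbl (A : TwoCat0) : Dbl0 :=
  {| dob := ob2 A; dh := mor2 A; dv := ob2 A; dsq := cell2 A;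
     hsrc := @msrc A; htgt := @mtgt A; vsrc := fun x => x; vtgt := fun x => x;
     stop := @csrc A; sbot := @ctgt A;
     slft := fun a => msrc (csrc a); srgt := fun a => mtgt (csrc a);
     dhid := @idm A; dhc := @mcomp A; dvid := fun x => x; dvc := fun u _ => u;
     dsq_hid := fun x => idc (idm x); dsq_vid := @idc A;
     dsq_hc := @hcomp A; dsq_vc := @vcomp A |}.

Definition HDblFun (A B : TwoCat0) (F : TwoFun A B) : DFun (HDbl A) (HDbl B).
Proof.
  refine (@Build_DFun (HDbl A) (HDbl B) (fo F) (fm F) (fo F) (fc F) _ _ _ _ _ _ _ _ _ _ _ _ _ _ _ _);
  simpl; intros;
  repeat first [ rewrite f_csrc | rewrite f_ctgt | rewrite f_msrc | rewrite f_mtgt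
               | rewrite f_idc | rewrite f_idm ];
  auto using f_msrc, f_mtgt, f_csrc, f_ctgt, f_idm, f_mcomp, f_idc, f_vcomp, f_hcomp.
Defined.

(* Main.v *)
From Stdlib Require Import ProofIrrelevance ClassicalEpsilon Setoid.
Require Import Defs.

Section CV.
Lemma is_cell_cv (T : TwoCat0) (c c' : cell2 T -> Prop) :
  (forall a, c a <-> c' a) -> forall a f g,
  @is_cell (@Build_Pre2 T c) a f g <-> @is_cell (@Build_Pre2 T c') a f g.
Proof. intros H a f g; unfold is_cell; simpl; rewrite H; tauto. Qed.

Lemma inv_cv (T : TwoCat0) (c c' : cell2 T -> Prop) :
  (forall a, c a <-> c' a) -> forall a,
  @invertible_cell (@Build_Pre2 T c) a <-> @invertible_cell (@Build_Pre2 T c') a.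
Proof. intros H a; unfold invertible_cell; simpl.
  split; intros [h [b [h1 h2]]]; split; try (apply H; exact h); exists b;
  split; try exact h2; [apply (is_cell_cv _ _ _ H) in h1 | apply (is_cell_cv _ _ _ H)]; auto.
Qed.

Lemma iso_cv (T : TwoCat0) (c c' : cell2 T -> Prop) :
  (forall a, c a <-> c' a) -> forall a f g,
  @iso_cell (@Build_Pre2 T c) a f g <-> @iso_cell (@Build_Pre2 T c') a f g.
Proof. intros H a f g; unfold iso_cell; rewrite (is_cell_cv _ _ _ H), (inv_cv _ _ _ H); tauto. Qed.

Lemma equiv_cv (T : TwoCat0) (c c' : cell2 T -> Prop) :
  (forall a, c a <-> c' a) -> forall f,
  @equivalence (@Build_Pre2 T c) f <-> @equivalence (@Build_Pre2 T c') f.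
Proof. intros H f; unfold equivalence.
  split; intros (g & a & b & h1 & h2 & h3 & h4); exists g, a, b;
  (split; [exact h1|split; [exact h2|split]]).
  - apply (iso_cv _ _ _ H); exact h3.
  - apply (iso_cv _ _ _ H); exact h4.
  - apply (iso_cv _ _ _ H); exact h3.
  - apply (iso_cv _ _ _ H); exact h4.
Qed.
End CV.

Lemma biequiv_cv (T U : TwoCat0) (c1 c1' : cell2 T -> Prop) (c2 c2' : cell2 U -> Prop)
  (o : ob2 T -> ob2 U) (m: mor2 T -> mor2 U) (c : cell2 T -> cell2 U) :
 (forall a, c1 a <-> c1' a) -> (forall a, c2 a <-> c2' a) ->
 biequivalence (@Build_PFun (@Build_Pre2 T c1) (@Build_Pre2 U c2) o m c) ->
 biequivalence (@Build_PFun (@Build_Pre2 T c1') (@Build_Pre2 U c2') o m c).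
Proof.
  intros H1 H2 [B1 [B2 [B3 B4]]]; simpl in *.
  split; [|split; [|split]].
  - intros y; destruct (B1 y) as (x & g & e1 & e2 & e3); exists x, g; split; [exact e1|split; [exact e2|]].
    apply (equiv_cv _ _ _ H2); auto.
  - intros x x' g e1 e2; destruct (B2 x x' g e1 e2) as (f & b & k1 & k2 & k3).
    exists f, b; split; [exact k1|split; [exact k2|]]; apply (iso_cv _ _ _ H2); auto.
  - intros f f' b e1 e2 e3. apply (is_cell_cv _ _ _ H2) in e3.
    destruct (B3 f f' b e1 e2 e3) as (a & k1 & k2); exists a; split; auto.
    apply (is_cell_cv _ _ _ H1); auto.
  - intros a a' k1 k2; apply B4; apply H1; auto.
Qed.

Lemma lackfib_cv (T U : TwoCat0) (c1 c1' : cell2 T -> Prop) (c2 c2' : cell2 U -> Prop)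
  (o : ob2 T -> ob2 U) (m: mor2 T -> mor2 U) (c : cell2 T -> cell2 U) :
 (forall a, c1 a <-> c1' a) -> (forall a, c2 a <-> c2' a) ->
 lack_fibration (@Build_PFun (@Build_Pre2 T c1) (@Build_Pre2 U c2) o m c) ->
 lack_fibration (@Build_PFun (@Build_Pre2 T c1') (@Build_Pre2 U c2') o m c).
Proof.
  intros H1 H2 [L1 L2]; simpl in *; split.
  - intros x b e k. apply (equiv_cv _ _ _ H2) in k.
    destruct (L1 x b e k) as (a & q1 & q2 & q3); exists a; split; [exact q1|split; [|exact q3]].
    apply (equiv_cv _ _ _ H1); auto.
  - intros x b e k. apply (inv_cv _ _ _ H2) in k.
    destruct (L2 x b e k) as (a & q1 & q2 & q3); exists a; split; [exact q1|split; [|exact q3]].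
    apply (inv_cv _ _ _ H1); auto.
Qed.

Lemma glob_triv (A : TwoCat0) (a : cell2 A) : (True <-> @globular (HDbl A) a).
Proof. unfold globular; simpl; tauto. Qed.

Lemma H_biequiv (A B : TwoCat0) (F : TwoFun A B) :
  biequivalence (pfun_of F) <-> biequivalence (HHfun (HDblFun F)).
Proof.
  destruct A, B. split; intro H.
  - exact (biequiv_cv _ _ _ _ _ _ _ _ _ (glob_triv _) (glob_triv _) H).
  - refine (biequiv_cv _ _ _ _ _ _ _ _ _ _ _ H); intro a; rewrite <- glob_triv; tauto.
Qed.

Lemma H_lackfib (A B : TwoCat0) (F : TwoFun A B) :
  lack_fibration (pfun_of F) <-> lack_fibration (HHfun (HDblFun F)).
Proof.
  destruct A, B. split; intro H.
  - exact (lackfib_cv _ _ _ _ _ _ _ _ _ (glob_triv _) (glob_triv _) H).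
  - refine (lackfib_cv _ _ _ _ _ _ _ _ _ _ _ H); intro a; rewrite <- glob_triv; tauto.
Qed.


Lemma HDbl_laws (A : TwoCat0) (L : TwoCatLaws A) : DblLaws (HDbl A).
Proof.
  destruct L; constructor; simpl; intros; auto.
  all: repeat match goal with
       | H : _ = _ |- _ => progress (first [rewrite l_vcomp_src by exact H | rewrite l_vcomp_tgt by exact H
             | rewrite l_hcomp_src by exact H | rewrite l_hcomp_tgt by exact H])
       end; auto.
  all: try (rewrite l_idc_src; auto).

  all: try (rewrite l_mcomp_src by exact H; auto).
  all: try (rewrite l_mcomp_tgt by exact H; auto).
  subst v. pose proof (l_vcomp_idl (idc (idm u))) as E; rewrite l_idc_src in E; auto.
Qed.

Definition twofun_of (A B : TwoCat0) (G : DFun (HDbl A) (HDbl B)) : TwoFun A B.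
Proof.
  refine (@Build_TwoFun A B (go G) (gh G) (gs G) _ _ _ _ _ _ _ _ _).
  - exact (g_hsrc G).
  - exact (g_htgt G).
  - exact (g_top G).
  - exact (g_bot G).
  - exact (g_hid G).
  - exact (g_hc G).
  - exact (g_sqvid G).
  - exact (g_sqvc G).
  - exact (g_sqhc G).
Defined.

Lemma cof_back_gen (A B : TwoCat) (F : TwoFun A B)
  (trivH : forall (X Y : TwoCat) (p : TwoFun X Y), lack_fibration (pfun_of p) ->
      biequivalence (pfun_of p) -> dbl_trivfib (HDblFun p)) :
  dbl_cofibration (HDblFun F) -> cofibration2 F.
Proof.
  intros HC X Y p Hf Hb u v e1 e2 e3.
  destruct (HC (Build_DblCat (@HDbl_laws X (tc_laws X))) (Build_DblCat (@HDbl_laws Y (tc_laws Y)))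
              (HDblFun p) (trivH X Y p Hf Hb) (HDblFun u) (HDblFun v) e1 e2 e1 e3)
    as (h & k1 & k2 & k3 & k4 & k5 & k6 & k7 & k8).
  exists (@twofun_of B X h); simpl; repeat split; auto.
Qed.


Lemma strong_lack (P Q : Pre2) (F : PFun P Q)
 (Pms_idm : forall x : ob2 P, msrc (idm x) = x) (Pmt_idm : forall x : ob2 P, mtgt (idm x) = x)
 (Pms_mc : forall f g : mor2 P, mtgt f = msrc g -> msrc (mcomp f g) = msrc f)
 (Pmt_mc : forall f g : mor2 P, mtgt f = msrc g -> mtgt (mcomp f g) = mtgt g)
 (Pcs_idc : forall f : mor2 P, csrc (idc f) = f) (Pct_idc : forall f : mor2 P, ctgt (idc f) = f)
 (Pcs_vc : forall a b : cell2 P, ctgt a = csrc b -> csrc (vcomp a b) = csrc a)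
 (Pct_vc : forall a b : cell2 P, ctgt a = csrc b -> ctgt (vcomp a b) = ctgt b)
 (Pcv_idc : forall f : mor2 P, cv (idc f))
 (Pcv_vc : forall a b : cell2 P, cv a -> cv b -> ctgt a = csrc b -> cv (vcomp a b))
 (Qpar_s : forall b : cell2 Q, cv b -> msrc (csrc b) = msrc (ctgt b))
 (Qpar_t : forall b : cell2 Q, cv b -> mtgt (csrc b) = mtgt (ctgt b))
 (Fms : forall f, msrc (pfm F f) = pfo F (msrc f)) (Fmt : forall f, mtgt (pfm F f) = pfo F (mtgt f))
 (Fcs : forall a, csrc (pfc F a) = pfm F (csrc a)) (Fct : forall a, ctgt (pfc F a) = pfm F (ctgt a))
 (Fidm : forall x, pfm F (idm x) = idm (pfo F x))
 (Fmc : forall f g, mtgt f = msrc g -> pfm F (mcomp f g) = mcomp (pfm F f) (pfm F g))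
 (Fidc : forall f, pfc F (idc f) = idc (pfm F f))
 (Fvc : forall a b, cv a -> cv b -> ctgt a = csrc b -> pfc F (vcomp a b) = vcomp (pfc F a) (pfc F b))
 (Sobj : forall y, exists x, pfo F x = y)
 (Smor : forall x x' g, msrc g = pfo F x -> mtgt g = pfo F x' ->
     exists f, msrc f = x /\ mtgt f = x' /\ pfm F f = g)
 (Scell : forall f f' b, msrc f = msrc f' -> mtgt f = mtgt f' -> is_cell b (pfm F f) (pfm F f') ->
     exists a, is_cell a f f' /\ pfc F a = b)
 (Sfaith : forall a a', cv a -> cv a' -> csrc a = csrc a' -> ctgt a = ctgt a' ->
     pfc F a = pfc F a' -> a = a') :
 lack_fibration F.
Proof.
  assert (R : forall a f g, is_cell a f g -> msrc f = msrc g -> mtgt f = mtgt g ->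
             invertible_cell (pfc F a) -> invertible_cell a).
  { intros a f g [ca [sa ta]] ms mt [_ [b [[cb [sb tb]] [e1 e2]]]].
    rewrite Fct, ta in sb. rewrite Fcs, sa in tb.
    destruct (Scell g f b (eq_sym ms) (eq_sym mt) (conj cb (conj sb tb))) as (b' & [cb' [sb' tb']] & eb).
    split; [exact ca|]. exists b'. split; [split; [exact cb'|split; congruence]|].
    split.
    - apply Sfaith; auto.
      + apply Pcv_vc; auto; congruence.
      + rewrite Pcs_vc, Pcs_idc; congruence.
      + rewrite Pct_vc, Pct_idc; congruence.
      + rewrite Fvc, Fidc, eb, e1, Fcs; auto; congruence.
    - apply Sfaith; auto.
      + apply Pcv_vc; auto; congruence.
      + rewrite Pcs_vc, Pcs_idc; congruence.
      + rewrite Pct_vc, Pct_idc; congruence.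
      + rewrite Fvc, Fidc, eb, e2, Fct; auto; congruence. }
  split.
  - intros c b e (g & a1 & a2 & eg1 & eg2 & [[h1c [h1s h1t]] h1i] & [[h2c [h2s h2t]] h2i]).
    destruct (Sobj (msrc b)) as [x ex].
    destruct (Smor x c b (eq_sym ex) e) as (b' & eb1 & eb2 & eb3).
    destruct (Smor c x g (eq_trans eg1 e) (eq_trans eg2 (eq_sym ex))) as (g' & eg'1 & eg'2 & eg'3).
    assert (cmp1 : mtgt b' = msrc g') by congruence.
    assert (cmp2 : mtgt g' = msrc b') by congruence.
    destruct (Scell (idm x) (mcomp b' g') a1) as (a1' & [c1 [s1 t1]] & ea1).
    { rewrite Pms_idm, Pms_mc; auto. }
    { rewrite Pmt_idm, Pmt_mc; auto. }
    { split; [exact h1c|]. rewrite Fidm, Fmc, ex, eb3, eg'3 by auto. auto. }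
    destruct (Scell (mcomp g' b') (idm c) a2) as (a2' & [c2 [s2 t2]] & ea2).
    { rewrite Pms_idm, Pms_mc; auto. }
    { rewrite Pmt_idm, Pmt_mc; auto. }
    { split; [exact h2c|]. rewrite Fidm, Fmc, <- e, eb3, eg'3 by auto. auto. }
    exists b'. split; [exact eb2|split; [|exact eb3]].
    exists g', a1', a2'. split; [congruence|split; [congruence|split]].
    + split; [split; [exact c1|split; [rewrite eb1; exact s1|exact t1]]|].
      apply (R a1' (idm x) (mcomp b' g')); [split; auto| | |].
      * rewrite Pms_idm, Pms_mc; auto.
      * rewrite Pmt_idm, Pmt_mc; auto.
      * rewrite ea1; auto.
    + split; [split; [exact c2|split; [exact s2|rewrite eb2; exact t2]]|].
      apply (R a2' (mcomp g' b') (idm c)); [split; auto| | |].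
      * rewrite Pms_idm, Pms_mc; auto.
      * rewrite Pmt_idm, Pmt_mc; auto.
      * rewrite ea2; auto.
  - intros c beta e k.
    pose proof k as [cb _].
    destruct (Smor (msrc c) (mtgt c) (csrc beta)) as (f & ef1 & ef2 & ef3).
    { rewrite Qpar_s, e, Fms; auto. }
    { rewrite Qpar_t, e, Fmt; auto. }
    destruct (Scell f c beta) as (al & [ca [sa ta]] & eal); auto.
    { split; auto. }
    exists al. split; [exact ta|split; [|exact eal]].
    apply (R al f c); auto. split; auto. rewrite eal; auto.
Qed.


Definition vwf (A : TwoCat0) (c : VCell (cell2 A)) : Prop :=
  msrc (csrc (va c)) = msrc (csrc (vb c)) /\ mtgt (csrc (va c)) = mtgt (csrc (vb c)) /\
  csrc (vs0 c) = csrc (va c) /\ ctgt (vs0 c) = csrc (vb c) /\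
  csrc (vs1 c) = ctgt (va c) /\ ctgt (vs1 c) = ctgt (vb c) /\
  vcomp (vs0 c) (vb c) = vcomp (va c) (vs1 c).

Lemma wf_iff (A : TwoCat0) (c : VCell (cell2 A)) : @VCell_wf (HDbl A) c <-> @vwf A c.
Proof. unfold VCell_wf, vwf, globular; simpl; tauto. Qed.

Lemma inv_data {T : TwoCat0} {a : cell2 T} {f g : mor2 T} :
  @iso_cell (pre2_of T) a f g -> exists b, csrc b = g /\ ctgt b = f /\ csrc a = f /\ ctgt a = g /\
    vcomp a b = idc f /\ vcomp b a = idc g.
Proof. intros [[_ [s t]] [_ [b [[_ [bs bt]] [e1 e2]]]]]. exists b. subst; repeat split; auto. Qed.

Lemma ISO2 (B : TwoCat) (u v : cell2 B) (b1 b2 : cell2 B) :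
  @iso_cell (pre2_of B) b1 (csrc u) (csrc v) -> @iso_cell (pre2_of B) b2 (ctgt u) (ctgt v) ->
  vcomp b1 v = vcomp u b2 ->
  msrc (csrc u) = msrc (csrc v) -> mtgt (csrc u) = mtgt (csrc v) ->
  @iso_cell (VV (HDbl B)) (mkVCell u v b1 b2) u v.
Proof.
  destruct B as [B L]; simpl in *. destruct L.
  intros I1 I2 E ms mt.
  destruct (inv_data I1) as (c1 & c1s & c1t & b1s & b1t & e11 & e12).
  destruct (inv_data I2) as (c2 & c2s & c2t & b2s & b2t & e21 & e22).
  assert (E' : vcomp c1 u = vcomp v c2).
  { assert (X1 : vcomp c1 u = vcomp (vcomp c1 u) (vcomp b2 c2)).
    { rewrite e21. rewrite <- (l_vcomp_tgt c1 u) by congruence. rewrite l_vcomp_idr; auto. }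
    rewrite X1. rewrite (l_vcomp_assoc c1 u (vcomp b2 c2)) by (rewrite ?l_vcomp_src; congruence).
    rewrite <- (l_vcomp_assoc u b2 c2) by congruence. rewrite <- E.
    rewrite (l_vcomp_assoc b1 v c2) by congruence.
    rewrite <- (l_vcomp_assoc c1 b1 (vcomp v c2)) by (rewrite ?l_vcomp_src; congruence).
    rewrite e12. rewrite <- (l_vcomp_src v c2) by congruence.
    apply l_vcomp_idl. }
  split; [|split].
  - split; [|simpl; auto]. apply wf_iff; unfold vwf; simpl; repeat split; auto.
  - apply wf_iff; unfold vwf; simpl; repeat split; auto.
  - exists (mkVCell v u c1 c2). simpl. split; [|split].
    + split; [|simpl; auto]. apply wf_iff; unfold vwf; simpl; repeat split; auto.
    + simpl. rewrite e11, e21. auto.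
    + simpl. rewrite e12, e22. auto.
Qed.

Lemma VF4 (A B : TwoCat) (F : TwoFun A B) : biequivalence (pfun_of F) ->
 forall a a' : VCell (cell2 A),
 @VCell_wf (HDbl A) a -> @VCell_wf (HDbl A) a' -> va a = va a' -> vb a = vb a' ->
 mkVCell (fc F (va a)) (fc F (vb a)) (fc F (vs0 a)) (fc F (vs1 a)) =
 mkVCell (fc F (va a')) (fc F (vb a')) (fc F (vs0 a')) (fc F (vs1 a')) -> a = a'.
Proof.
  intros [_ [_ [_ B4]]] a a' w w' e1 e2 e3. simpl in B4.
  apply wf_iff in w; apply wf_iff in w'.
  destruct a as [a1 a2 a3 a4], a' as [a1' a2' a3' a4']; simpl in *.
  destruct w as (_ & _ & w3 & w4 & w5 & w6 & _), w' as (_ & _ & w3' & w4' & w5' & w6' & _).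
  injection e3; intros q4 q3 _ _. subst a1' a2'.
  simpl in *. f_equal; apply B4; auto; congruence.
Qed.

Lemma VF3 (A B : TwoCat) (F : TwoFun A B) : biequivalence (pfun_of F) ->
 forall (f f' : cell2 A) (b : VCell (cell2 B)),
 msrc (csrc f) = msrc (csrc f') -> mtgt (csrc f) = mtgt (csrc f') ->
 @is_cell (VV (HDbl B)) b (fc F f) (fc F f') ->
 exists a : VCell (cell2 A), @is_cell (VV (HDbl A)) a f f' /\
   mkVCell (fc F (va a)) (fc F (vb a)) (fc F (vs0 a)) (fc F (vs1 a)) = b.
Proof.
  intros [_ [_ [B3 B4]]] f f' b ms mt [w [e1 e2]]. simpl in B3, B4, e1, e2.
  pose proof (tc_laws A) as LA. pose proof (tc_laws B) as LB.
  apply wf_iff in w. destruct b as [b1 b2 b3 b4]; simpl in *. subst b1 b2.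
  destruct w as (_ & _ & w3 & w4 & w5 & w6 & w7); simpl in w3, w4, w5, w6, w7.
  destruct (B3 (csrc f) (csrc f') b3 ms mt) as (t0 & [_ [t0s t0t]] & et0).
  { split; [exact I|]. split; [exact (eq_trans w3 (f_csrc F f)) | exact (eq_trans w4 (f_csrc F f'))]. }
  destruct (B3 (ctgt f) (ctgt f') b4) as (t1 & [_ [t1s t1t]] & et1).
  { destruct LA. rewrite <- !l_cell_par_src. auto. }
  { destruct LA. rewrite <- !l_cell_par_tgt. auto. }
  { split; [exact I|]. split; [exact (eq_trans w5 (f_ctgt F f)) | exact (eq_trans w6 (f_ctgt F f'))]. }
  exists (mkVCell f f' t0 t1). split.
  - split; [|simpl; auto]. apply wf_iff; unfold vwf; simpl.
    repeat split; auto.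
    apply B4; auto.
    + destruct LA; rewrite !l_vcomp_src; auto.
    + destruct LA; rewrite !l_vcomp_tgt; auto.
    + rewrite !f_vcomp by auto. rewrite et0, et1. auto.
  - simpl. rewrite et0, et1. auto.
Qed.

Lemma VF1 (A B : TwoCat) (F : TwoFun A B) : biequivalence (pfun_of F) ->
 forall y : ob2 B, exists (x : ob2 A) (g : cell2 B),
   msrc (csrc g) = fo F x /\ mtgt (csrc g) = y /\ @equivalence (VV (HDbl B)) g.
Proof.
  intros [B1 _] y. simpl in B1.
  destruct (B1 y) as (x & g & e1 & e2 & (g' & a & b & k1 & k2 & h1 & h2)).
  pose proof (tc_laws B) as LB.
  exists x, (idc g). destruct LB. rewrite l_idc_src. split; [exact e1|split; [exact e2|]].
  pose proof (inv_data h1) as (ai & _ & _ & as_ & at_ & _ & _).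
  pose proof (inv_data h2) as (bi & _ & _ & bs & bt & _ & _).
  simpl in k1, k2, as_, at_, bs, bt.
  exists (idc g'), (mkVCell (idc (idm (msrc g))) (idc (mcomp g g')) a a),
    (mkVCell (idc (mcomp g' g)) (idc (idm (mtgt g))) b b).
  simpl. rewrite !l_idc_src. split; [exact k1|split; [exact k2|split]].
  - rewrite <- l_idc_mcomp by auto. apply ISO2.
    + rewrite !l_idc_src. exact h1.
    + rewrite !l_idc_tgt. exact h1.
    + rewrite <- as_, <- at_, l_vcomp_idl, l_vcomp_idr. auto.
    + rewrite !l_idc_src, l_idm_src, l_mcomp_src; auto.
    + rewrite !l_idc_src, l_idm_tgt, l_mcomp_tgt; auto.
  - rewrite <- l_idc_mcomp by auto. apply ISO2.
    + rewrite !l_idc_src. exact h2.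
    + rewrite !l_idc_tgt. exact h2.
    + rewrite <- bs, <- bt, l_vcomp_idl, l_vcomp_idr. auto.
    + rewrite !l_idc_src, l_idm_src, l_mcomp_src; auto.
    + rewrite !l_idc_src, l_idm_tgt, l_mcomp_tgt; auto.
Qed.

Lemma VF2 (A B : TwoCat) (F : TwoFun A B) : biequivalence (pfun_of F) ->
 forall (x x' : ob2 A) (g : cell2 B), msrc (csrc g) = fo F x -> mtgt (csrc g) = fo F x' ->
 exists (f : cell2 A) (b : VCell (cell2 B)),
   msrc (csrc f) = x /\ mtgt (csrc f) = x' /\ @iso_cell (VV (HDbl B)) b (fc F f) g.
Proof.
  intros [_ [B2 [B3 _]]] x x' g e1 e2. simpl in B2, B3.
  pose proof (tc_laws A) as LA. pose proof (tc_laws B) as LB.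
  destruct (B2 x x' (csrc g) e1 e2) as (f1 & b1 & q1 & q2 & I1).
  destruct (B2 x x' (ctgt g)) as (f2 & b2 & r1 & r2 & I2).
  { destruct LB; rewrite <- l_cell_par_src; auto. }
  { destruct LB; rewrite <- l_cell_par_tgt; auto. }
  pose proof (inv_data I1) as (c1 & c1s & c1t & b1s & b1t & e11 & e12).
  pose proof (inv_data I2) as (c2 & c2s & c2t & b2s & b2t & e21 & e22).
  simpl in *.
  destruct LB.
  destruct (B3 f1 f2 (vcomp b1 (vcomp g c2))) as (al & [_ [als alt]] & eal).
  { congruence. }
  { congruence. }
  { split; [exact I|]. split.
    - rewrite l_vcomp_src; auto. rewrite l_vcomp_src; congruence.
    - rewrite l_vcomp_tgt. rewrite l_vcomp_tgt; congruence. rewrite l_vcomp_src; congruence. }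
  unfold pre2_of in als, alt; simpl in als, alt.
  exists al, (mkVCell (fc F al) g b1 b2).
  split; [transitivity (msrc f1); [f_equal; exact als|exact q1]|split; [transitivity (mtgt f1); [f_equal; exact als|exact q2]|]].
  apply ISO2.
  - rewrite f_csrc, als. exact I1.
  - rewrite f_ctgt, alt. exact I2.
  - rewrite eal. rewrite l_vcomp_assoc by (rewrite ?l_vcomp_src, ?l_vcomp_tgt; congruence).
    rewrite l_vcomp_assoc by congruence. rewrite e22. rewrite l_vcomp_idr. auto.
  - rewrite f_csrc, f_msrc, als, q1. auto.
  - rewrite f_csrc, f_mtgt, als, q2. auto.
Qed.

Lemma V_biequiv (A B : TwoCat) (F : TwoFun A B) : biequivalence (pfun_of F) ->
  biequivalence (VVfun (HDblFun F)).
Proof. intro H. split; [|split; [|split]]; simpl.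
  - exact (VF1 _ _ F H).
  - exact (VF2 _ _ F H).
  - exact (VF3 _ _ F H).
  - exact (VF4 _ _ F H).
Qed.

Lemma iso_inv_ex {T : Pre2} {a : cell2 T} {f g} : @iso_cell T a f g -> exists b, @iso_cell T b g f.
Proof.
  intros [[ca [sa ta]] [_ [b [[cb [sb tb]] [e1 e2]]]]]. exists b.
  split; [split; [exact cb|split; congruence]|].
  split; [exact cb|]. exists a. split; [split; [exact ca|split; congruence]|].
  split; congruence.
Qed.

Lemma Sobj_X (X Y : TwoCat) (p : TwoFun X Y) : lack_fibration (pfun_of p) -> biequivalence (pfun_of p) ->
  forall y, exists x, fo p x = y.
Proof.
  intros [L1 _] [B1 _] y. unfold pfun_of, pre2_of in *; cbn in *.
  destruct (B1 y) as (x0 & g & e1 & e2 & (g' & a & b & k1 & k2 & h1 & h2)). cbn in *.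
  destruct (iso_inv_ex h1) as [ai hai]. destruct (iso_inv_ex h2) as [bi hbi].
  destruct (L1 x0 g') as (a0 & q1 & q2 & q3).
  { congruence. }
  { exists g, bi, ai. cbn. split; [congruence|split; [congruence|split]].
    - rewrite k1. exact hbi.
    - rewrite k2. exact hai. }
  exists (msrc a0). rewrite <- f_msrc, q3. congruence.
Qed.

Lemma Smor_X (X Y : TwoCat) (p : TwoFun X Y) : lack_fibration (pfun_of p) -> biequivalence (pfun_of p) ->
  forall x x' g, msrc g = fo p x -> mtgt g = fo p x' ->
     exists f, msrc f = x /\ mtgt f = x' /\ fm p f = g.
Proof.
  intros [_ L2] [_ [B2 _]] x x' g e1 e2. unfold pfun_of, pre2_of in *; cbn in *.
  destruct (B2 x x' g e1 e2) as (f & b & q1 & q2 & I).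
  destruct (iso_inv_ex I) as [bi [[_ [bs bt]] Hi]].
  destruct (L2 f bi bt Hi) as (al & r1 & r2 & r3).
  pose proof (tc_laws X) as LX. destruct LX.
  exists (csrc al). split; [rewrite l_cell_par_src, r1; auto|split; [rewrite l_cell_par_tgt, r1; auto|]].
  rewrite <- f_csrc, r3. exact bs.
Qed.


Lemma V_lack (X Y : TwoCat) (p : TwoFun X Y) : lack_fibration (pfun_of p) -> biequivalence (pfun_of p) ->
  lack_fibration (VVfun (HDblFun p)).
Proof.
  intros HL HB.
  pose proof (tc_laws X) as LX. pose proof (tc_laws Y) as LY.
  apply strong_lack; simpl.
  - intros; destruct LX; rewrite l_idc_src, l_idm_src; auto.
  - intros; destruct LX; rewrite l_idc_src, l_idm_tgt; auto.
  - intros; destruct LX; rewrite l_hcomp_src, l_mcomp_src; auto.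
  - intros; destruct LX; rewrite l_hcomp_src, l_mcomp_tgt; auto.
  - auto.
  - auto.
  - auto.
  - auto.
  - intros f; apply wf_iff; unfold vwf; simpl; destruct LX.
    rewrite l_vcomp_idl, l_vcomp_idr, l_idc_src, l_idc_tgt. repeat split; auto.
  - intros [a1 a2 a3 a4] [b1 b2 b3 b4] wa wb e; apply wf_iff in wa; apply wf_iff in wb; apply wf_iff.
    unfold vwf in *; simpl in *. subst b1.
    destruct wa as (wa1 & wa2 & wa3 & wa4 & wa5 & wa6 & wa7).
    destruct wb as (wb1 & wb2 & wb3 & wb4 & wb5 & wb6 & wb7).
    destruct LX.
    rewrite !l_vcomp_src, !l_vcomp_tgt by congruence.
    split; [congruence|split; [congruence|]]. repeat split; auto.
    rewrite l_vcomp_assoc by congruence. rewrite wb7.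
    rewrite <- l_vcomp_assoc by congruence. rewrite wa7.
    rewrite l_vcomp_assoc by congruence. auto.
  - intros b wb; apply wf_iff in wb; apply wb.
  - intros b wb; apply wf_iff in wb; apply wb.
  - intros; rewrite f_csrc, f_msrc; auto.
  - intros; rewrite f_csrc, f_mtgt; auto.
  - auto.
  - auto.
  - intros; rewrite f_idc, f_idm; auto.
  - intros; apply f_hcomp; auto.
  - intros; rewrite !f_idc, f_csrc, f_ctgt; auto.
  - intros [a1 a2 a3 a4] [b1 b2 b3 b4] wa wb e; apply wf_iff in wa; apply wf_iff in wb.
    unfold vwf in *; simpl in *. subst b1.
    destruct wa as (wa1 & wa2 & wa3 & wa4 & wa5 & wa6 & wa7).
    destruct wb as (wb1 & wb2 & wb3 & wb4 & wb5 & wb6 & wb7).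
    rewrite !f_vcomp by congruence. auto.
  - exact (Sobj_X _ _ p HL HB).
  - intros x x' g e1 e2.
    destruct (Smor_X _ _ p HL HB x x' (csrc g) e1 e2) as (h & h1 & h2 & h3).
    destruct (Smor_X _ _ p HL HB x x' (ctgt g)) as (k & k1 & k2 & k3).
    { destruct LY; rewrite <- l_cell_par_src; auto. }
    { destruct LY; rewrite <- l_cell_par_tgt; auto. }
    destruct HB as [_ [_ [B3 _]]]. simpl in B3.
    destruct (B3 h k g) as (a & [_ [as_ at_]] & ea).
    { congruence. }
    { congruence. }
    { split; [exact I|split; auto]. }
    unfold pre2_of in as_, at_; simpl in as_, at_.
    exists a. rewrite as_. auto.
  - exact (VF3 _ _ p HB).
  - exact (VF4 _ _ p HB).
Qed.

Set Implicit Arguments.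

Definition gsq (D : Dbl0) := {s : dsq D | globular s}.

Definition mkg (D : Dbl0) (s : dsq D) (d : gsq D) : gsq D :=
  match excluded_middle_informative (globular s) with
  | left g => exist _ s g | right _ => d end.

Lemma mkg_val (D : Dbl0) (s : dsq D) d : globular s -> proj1_sig (mkg s d) = s.
Proof. intro g; unfold mkg; destruct (excluded_middle_informative (globular s)); simpl; tauto. Qed.

Lemma gsq_eq (D : Dbl0) (a b : gsq D) : proj1_sig a = proj1_sig b -> a = b.
Proof. destruct a, b; simpl; intros ->; f_equal; apply proof_irrelevance. Qed.

Lemma glob_vid {D : DblCat} (f : dh D) : globular (dsq_vid f).
Proof. destruct (dc_laws D); unfold globular; rewrite d_sqvid_top, d_sqvid_lft, d_sqvid_rgt; auto. Qed.

Lemma glob_vc {D : DblCat} (a b : dsq D) : globular a -> globular b -> sbot a = stop b ->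
  globular (dsq_vc a b).
Proof. destruct (dc_laws D); unfold globular; intros [g1 g2] [g3 g4] e.
  rewrite d_sqvc_lft, d_sqvc_rgt, d_sqvc_top by exact e.
  rewrite g1, g2, g3, g4, <- e.
  assert (hsrc (sbot a) = hsrc (stop a)) as E1.
  { rewrite <- d_sq_lft_tgt, g1, d_vid_tgt; auto. }
  assert (htgt (sbot a) = htgt (stop a)) as E2.
  { rewrite <- d_sq_rgt_tgt, g2, d_vid_tgt; auto. }
  rewrite E1, E2.
  split; [pose proof (d_vc_idl (dvid (hsrc (stop a)))) as E | pose proof (d_vc_idl (dvid (htgt (stop a)))) as E];
  rewrite d_vid_src in E; exact E.
Qed.

Lemma glob_hc {D : DblCat} (a b : dsq D) : globular a -> globular b -> htgt (stop a) = hsrc (stop b) ->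
  globular (dsq_hc a b).
Proof. destruct (dc_laws D); unfold globular; intros [g1 g2] [g3 g4] e.
  assert (E : srgt a = slft b) by (rewrite g2, g3, e; auto).
  rewrite d_sqhc_lft, d_sqhc_rgt, d_sqhc_top by exact E.
  rewrite d_hc_src, d_hc_tgt by exact e. auto.
Qed.

Definition Hsub0 (D : DblCat) : TwoCat0 :=
  {| ob2 := dob D; mor2 := dh D; cell2 := gsq D;
     msrc := @hsrc D; mtgt := @htgt D;
     csrc := fun a => stop (proj1_sig a); ctgt := fun a => sbot (proj1_sig a);
     idm := @dhid D; mcomp := @dhc D;
     idc := fun f => exist _ (dsq_vid f) (glob_vid f);
     vcomp := fun a b => mkg (dsq_vc (proj1_sig a) (proj1_sig b)) a;
     hcomp := fun a b => mkg (dsq_hc (proj1_sig a) (proj1_sig b)) a |}.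

Lemma glob_par_src {D : DblCat} (s : dsq D) : globular s -> hsrc (sbot s) = hsrc (stop s).
Proof. destruct (dc_laws D); intros [g1 g2]; rewrite <- d_sq_lft_tgt, g1, d_vid_tgt; auto. Qed.
Lemma glob_par_tgt {D : DblCat} (s : dsq D) : globular s -> htgt (sbot s) = htgt (stop s).
Proof. destruct (dc_laws D); intros [g1 g2]; rewrite <- d_sq_rgt_tgt, g2, d_vid_tgt; auto. Qed.
Lemma glob_hcond {D : DblCat} (a b : dsq D) : globular a -> globular b ->
  htgt (stop a) = hsrc (stop b) -> srgt a = slft b.
Proof. intros [g1 g2] [g3 g4] e; rewrite g2, g3, e; auto. Qed.

Lemma vc_val {D : DblCat} (a b : gsq D) : sbot (proj1_sig a) = stop (proj1_sig b) ->
  proj1_sig (@vcomp (Hsub0 D) a b) = dsq_vc (proj1_sig a) (proj1_sig b).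
Proof. intro e; simpl; apply mkg_val; apply glob_vc; auto; apply proj2_sig. Qed.
Lemma hc_val {D : DblCat} (a b : gsq D) : htgt (stop (proj1_sig a)) = hsrc (stop (proj1_sig b)) ->
  proj1_sig (@hcomp (Hsub0 D) a b) = dsq_hc (proj1_sig a) (proj1_sig b).
Proof. intro e; simpl; apply mkg_val; apply glob_hc; auto; apply proj2_sig. Qed.

Lemma vc_top {D : DblCat} (a b : dsq D) : sbot a = stop b -> stop (dsq_vc a b) = stop a.
Proof. destruct (dc_laws D); auto. Qed.
Lemma vc_bot {D : DblCat} (a b : dsq D) : sbot a = stop b -> sbot (dsq_vc a b) = sbot b.
Proof. destruct (dc_laws D); auto. Qed.
Lemma hc_top {D : DblCat} (a b : dsq D) : globular a -> globular b -> htgt (stop a) = hsrc (stop b) ->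
  stop (dsq_hc a b) = dhc (stop a) (stop b).
Proof. intros; destruct (dc_laws D); apply d_sqhc_top; apply glob_hcond; auto. Qed.
Lemma hc_bot {D : DblCat} (a b : dsq D) : globular a -> globular b -> htgt (stop a) = hsrc (stop b) ->
  sbot (dsq_hc a b) = dhc (sbot a) (sbot b).
Proof. intros; destruct (dc_laws D); apply d_sqhc_bot; apply glob_hcond; auto. Qed.
Lemma hcsrc {D : DblCat} (f g : dh D) : htgt f = hsrc g -> hsrc (dhc f g) = hsrc f.
Proof. destruct (dc_laws D); auto. Qed.
Lemma hctgt {D : DblCat} (f g : dh D) : htgt f = hsrc g -> htgt (dhc f g) = htgt g.
Proof. destruct (dc_laws D); auto. Qed.
Lemma vidtop {D : DblCat} (f : dh D) : stop (dsq_vid f) = f.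
Proof. destruct (dc_laws D); auto. Qed.
Lemma vidbot {D : DblCat} (f : dh D) : sbot (dsq_vid f) = f.
Proof. destruct (dc_laws D); auto. Qed.
Lemma hidsrc {D : DblCat} (x : dob D) : hsrc (dhid x) = x.
Proof. destruct (dc_laws D); auto. Qed.
Lemma hidtgt {D : DblCat} (x : dob D) : htgt (dhid x) = x.
Proof. destruct (dc_laws D); auto. Qed.

Ltac gl := match goal with
 | |- globular (dsq_vc _ _) => apply glob_vc; [gl|gl|eqs]
 | |- globular (dsq_hc _ _) => apply glob_hc; [gl|gl|eqs]
 | |- globular (dsq_vid _) => apply glob_vid
 | |- globular _ => assumption end
with eqs := repeat first [ rewrite vidtop | rewrite vidbot | rewrite hidsrc | rewrite hidtgt
   | rewrite vc_top by eqs | rewrite vc_bot by eqs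
   | rewrite hc_top by (first [gl | eqs]) | rewrite hc_bot by (first [gl | eqs])
   | rewrite hcsrc by eqs | rewrite hctgt by eqs
   | match goal with g : globular ?s |- context [hsrc (sbot ?s)] => rewrite (glob_par_src g) end
   | match goal with g : globular ?s |- context [htgt (sbot ?s)] => rewrite (glob_par_tgt g) end ];
   first [reflexivity | assumption | symmetry; assumption
     | match goal with H : ?x = ?y |- _ => progress rewrite <- H; eqs end ].
Ltac mkv := repeat match goal with |- context [proj1_sig (mkg ?s ?d)] => rewrite (@mkg_val _ s d) end.

Lemma Hsub_laws (D : DblCat) : TwoCatLaws (Hsub0 D).
Proof.
  pose proof (dc_laws D) as L.
  constructor; simpl; intros.
  all: try (destruct L; auto; fail).
  all: repeat match goal with x : gsq _ |- _ => destruct x as [x ?] end; simpl in *.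
  all: try apply gsq_eq; simpl; mkv.
  all: try (gl; fail).
  all: try (eqs; fail).
  all: destruct L.
  - auto.
  - auto.
  - auto.
  - match goal with g : globular a |- _ => destruct g as [g1 g2] end.
    rewrite <- d_sqhid_vid, <- g1; auto.
  - match goal with g : globular a |- _ => destruct g as [g1 g2] end.
    rewrite <- d_sqhid_vid, <- g2; auto.
  - apply d_sqhc_assoc; apply glob_hcond; auto.
  - auto.
  - apply d_interchange; auto; apply glob_hcond; auto; eqs.
Qed.

Definition Hsub (D : DblCat) : TwoCat := Build_TwoCat (Hsub_laws D).

Lemma glob_map {X Y : Dbl0} (p : DFun X Y) (s : dsq X) : globular s -> globular (gs p s).
Proof. intros [g1 g2]; unfold globular.
  rewrite g_lft, g_rgt, g_top, g_hsrc, g_htgt, g1, g2, !g_vid; auto. Qed.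

Definition Hsub_fun (X Y : DblCat) (p : DFun X Y) : TwoFun (Hsub X) (Hsub Y).
Proof.
  refine (@Build_TwoFun (Hsub X) (Hsub Y) (go p) (gh p)
     (fun a => exist _ (gs p (proj1_sig a)) (glob_map p (proj2_sig a))) _ _ _ _ _ _ _ _ _); simpl.
  - exact (g_hsrc p).
  - exact (g_htgt p).
  - intros; apply g_top.
  - intros; apply g_bot.
  - exact (g_hid p).
  - exact (g_hc p).
  - intros; apply gsq_eq; simpl; apply g_sqvid.
  - intros [a ga] [b gb] e; apply gsq_eq; simpl in *. mkv.
    + apply g_sqvc; auto.
    + apply glob_vc; try apply glob_map; auto. rewrite g_top, g_bot, e; auto.
    + apply glob_vc; auto.
  - intros [a ga] [b gb] e; apply gsq_eq; simpl in *. mkv.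
    + apply g_sqhc; apply glob_hcond; auto.
    + apply glob_hc; try apply glob_map; auto. rewrite !g_top, g_hsrc, g_htgt, e; auto.
    + apply glob_hc; auto.
Defined.

Lemma glob_HD {A : TwoCat0} {X : Dbl0} (G : DFun (HDbl A) X) (a : cell2 A) : globular (gs G a).
Proof. unfold globular. rewrite g_lft, g_rgt, g_top, g_hsrc, g_htgt. simpl.
  split; [exact (g_vid G (msrc (csrc a))) | exact (g_vid G (mtgt (csrc a)))]. Qed.

Definition tr (A : TwoCat0) (X : DblCat) (G : DFun (HDbl A) X) : TwoFun A (Hsub X).
Proof.
  refine (@Build_TwoFun A (Hsub X) (go G) (gh G)
     (fun a => exist _ (gs G a) (glob_HD G a)) _ _ _ _ _ _ _ _ _); simpl.
  - exact (g_hsrc G).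
  - exact (g_htgt G).
  - intros; apply g_top.
  - intros; apply g_bot.
  - exact (g_hid G).
  - exact (g_hc G).
  - intros; apply gsq_eq; simpl; apply (g_sqvid G).
  - intros a b e; apply gsq_eq; simpl in *. mkv.
    + apply (g_sqvc G); auto.
    + apply glob_vc; try apply glob_HD. rewrite g_top, g_bot; simpl; rewrite e; auto.
  - intros a b e; apply gsq_eq; simpl in *. mkv.
    + apply (g_sqhc G); auto.
    + apply glob_hc; try apply glob_HD. rewrite !g_top, g_hsrc, g_htgt; simpl; rewrite e; auto.
Defined.

Definition untr (B : TwoCat0) (X : DblCat) (h : TwoFun B (Hsub X)) : DFun (HDbl B) X.
Proof.
  refine (@Build_DFun (HDbl B) X (fo h) (fm h) (fun x => dvid (fo h x))
     (fun a => proj1_sig (fc h a)) _ _ _ _ _ _ _ _ _ _ _ _ _ _ _ _); simpl.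
  - exact (f_msrc h).
  - exact (f_mtgt h).
  - intros; destruct (dc_laws X); auto.
  - intros; destruct (dc_laws X); auto.
  - intros; exact (f_csrc h s).
  - intros; exact (f_ctgt h s).
  - intros s. pose proof (f_csrc h s) as E. pose proof (f_msrc h (csrc s)) as E2. simpl in E, E2.
    revert E; generalize (@fc B (Hsub0 X) h s); intros [t [g1 g2]] E; simpl in *. rewrite g1, E, E2; auto.
  - intros s. pose proof (f_csrc h s) as E. pose proof (f_mtgt h (csrc s)) as E2. simpl in E, E2.
    revert E; generalize (@fc B (Hsub0 X) h s); intros [t [g1 g2]] E; simpl in *. rewrite g2, E, E2; auto.
  - exact (f_idm h).
  - exact (f_mcomp h).
  - auto.
  - intros u v e; subst v; destruct (dc_laws X).
    pose proof (d_vc_idl (dvid (fo h u))) as E; rewrite d_vid_src in E; auto.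
  - intros u. rewrite (f_idc h). simpl. rewrite (f_idm h). destruct (dc_laws X); auto.
  - intros f. rewrite (f_idc h). simpl. auto.
  - intros a b e. pose proof (f_hcomp h e) as E; simpl in E; rewrite E. apply hc_val.
    change (mtgt (csrc (fc h a)) = msrc (csrc (fc h b))). rewrite !f_csrc, f_mtgt, f_msrc, e; auto.
  - intros a b e. pose proof (f_vcomp h e) as E; simpl in E; rewrite E. apply vc_val.
    change (ctgt (fc h a) = csrc (fc h b)). rewrite f_csrc, f_ctgt, e; auto.
Defined.


Lemma cof_fwd_gen (A B : TwoCat) (F : TwoFun A B)
  (TL : forall (X Y : DblCat) (p : DFun X Y), lack_fibration (HHfun p) -> lack_fibration (pfun_of (Hsub_fun X Y p)))
  (TB : forall (X Y : DblCat) (p : DFun X Y), biequivalence (HHfun p) -> biequivalence (pfun_of (Hsub_fun X Y p))) :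
  cofibration2 F -> dbl_cofibration (HDblFun F).
Proof.
  intros HC X Y p [Hl1 [Hl2 [Hb1 Hb2]]] u v e1 e2 e3 e4.
  destruct (HC (Hsub X) (Hsub Y) (Hsub_fun X Y p) (TL X Y p Hl1) (TB X Y p Hb1) (tr X u) (tr Y v) e1 e2)
    as (h & k1 & k2 & k3 & k4 & k5 & k6).
  - intro a; apply gsq_eq; simpl; apply e4.
  - exists (untr h); simpl; repeat split; intros.
    + apply k1.
    + apply k2.
    + pose proof (k1 w) as E; simpl in E; rewrite E. symmetry; exact (g_vid u w).
    + pose proof (k3 s) as E; simpl in E. apply (f_equal (@proj1_sig _ _)) in E. simpl in E. exact E.
    + apply k4.
    + apply k5.
    + pose proof (k4 w) as E; simpl in E. rewrite g_vid, E. symmetry; exact (g_vid v w).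
    + pose proof (k6 s) as E; simpl in E. apply (f_equal (@proj1_sig _ _)) in E. simpl in E. exact E.
Qed.

Lemma is_cell_sub (X : DblCat) (a : gsq X) (f g : dh X) :
  @is_cell (pre2_of (Hsub X)) a f g <-> @is_cell (HH X) (proj1_sig a) f g.
Proof. unfold is_cell; simpl. pose proof (proj2_sig a); tauto. Qed.

Lemma inv_sub (X : DblCat) (a : gsq X) :
  @invertible_cell (pre2_of (Hsub X)) a <-> @invertible_cell (HH X) (proj1_sig a).
Proof.
  unfold invertible_cell; split.
  - intros [_ [b [hb [e1 e2]]]]. split; [exact (proj2_sig a)|]. exists (proj1_sig b).
    apply is_cell_sub in hb. split; [exact hb|].
    destruct hb as [_ [hb1 hb2]]; simpl in *.
    apply (f_equal (@proj1_sig _ _)) in e1. apply (f_equal (@proj1_sig _ _)) in e2.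
    simpl in e1, e2.
    rewrite mkg_val in e1 by (apply glob_vc; auto; apply proj2_sig).
    rewrite mkg_val in e2 by (apply glob_vc; auto; apply proj2_sig). auto.
  - intros [ga [b' [hb [e1 e2]]]]. split; [exact I|].
    destruct hb as [gb [hb1 hb2]]; simpl in *.
    exists (exist _ b' gb). split; [unfold is_cell; simpl; auto|].
    split; apply gsq_eq; simpl; rewrite mkg_val; auto; apply glob_vc; auto.
Qed.

Lemma iso_sub (X : DblCat) (a : gsq X) (f g : dh X) :
  @iso_cell (pre2_of (Hsub X)) a f g <-> @iso_cell (HH X) (proj1_sig a) f g.
Proof. unfold iso_cell. rewrite is_cell_sub, inv_sub. tauto. Qed.

Lemma equiv_sub (X : DblCat) (f : dh X) :
  @equivalence (pre2_of (Hsub X)) f <-> @equivalence (HH X) f.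
Proof. unfold equivalence; split.
  - intros (g & a & b & e1 & e2 & h1 & h2). exists g, (proj1_sig a), (proj1_sig b).
    apply iso_sub in h1; apply iso_sub in h2. auto.
  - intros (g & a & b & e1 & e2 & h1 & h2).
    pose proof (proj1 (proj1 h1)) as ga. pose proof (proj1 (proj1 h2)) as gb.
    exists g, (exist _ a ga), (exist _ b gb). split; [exact e1|split; [exact e2|split]];
    apply iso_sub; simpl; auto.
Qed.

Lemma TL_proof (X Y : DblCat) (p : DFun X Y) :
  lack_fibration (HHfun p) -> lack_fibration (pfun_of (Hsub_fun X Y p)).
Proof.
  intros [L1 L2]; split; simpl.
  - intros c b e k. apply equiv_sub in k.
    destruct (L1 c b e k) as (a & q1 & q2 & q3). exists a; split; [exact q1|split; [|exact q3]].
    apply equiv_sub; exact q2.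
  - intros c beta e k. apply inv_sub in k.
    destruct (L2 c (proj1_sig beta) e k) as (al & q1 & q2 & q3).
    exists (exist _ al (proj1 q2)). split; [exact q1|split].
    + apply inv_sub; exact q2.
    + apply gsq_eq; exact q3.
Qed.

Lemma TB_proof (X Y : DblCat) (p : DFun X Y) :
  biequivalence (HHfun p) -> biequivalence (pfun_of (Hsub_fun X Y p)).
Proof.
  intros [B1 [B2 [B3 B4]]]; split; [|split; [|split]]; simpl.
  - intros y. destruct (B1 y) as (x & g & e1 & e2 & e3). exists x, g.
    split; [exact e1|split; [exact e2|]]. apply equiv_sub; exact e3.
  - intros x x' g e1 e2. destruct (B2 x x' g e1 e2) as (f & b & q1 & q2 & q3).
    exists f, (exist _ b (proj1 (proj1 q3))). split; [exact q1|split; [exact q2|]].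
    apply iso_sub; exact q3.
  - intros f f' b e1 e2 k. apply is_cell_sub in k.
    destruct (B3 f f' (proj1_sig b) e1 e2 k) as (a & q1 & q2).
    exists (exist _ a (proj1 q1)). split.
    + apply is_cell_sub; exact q1.
    + apply gsq_eq; exact q2.
  - intros a a' _ _ e1 e2 e3. apply gsq_eq.
    apply (f_equal (@proj1_sig _ _)) in e3. simpl in e3.
    apply B4; auto; apply proj2_sig.
Qed.

Lemma trivH (X Y : TwoCat) (p : TwoFun X Y) : lack_fibration (pfun_of p) ->
  biequivalence (pfun_of p) -> dbl_trivfib (HDblFun p).
Proof.
  intros HL HB. split; [|split; [|split]].
  - apply H_lackfib; exact HL.
  - apply V_lack; auto.
  - apply H_biequiv; exact HB.
  - apply V_biequiv; exact HB.
Qed.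

Theorem theorem6p8 (A B : TwoCat) (F : TwoFun A B) :
  (biequiv2 F <-> dbl_weq (HDblFun F)) /\
  (cofibration2 F <-> dbl_cofibration (HDblFun F)).
Proof.
  split; split.
  - intro H. split; [apply H_biequiv; exact H | apply V_biequiv; exact H].
  - intros [H _]. apply H_biequiv; exact H.
  - apply cof_fwd_gen; [exact TL_proof | exact TB_proof].
  - apply cof_back_gen. exact trivH.
Qed.
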